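(* Let $N=\{1,\ldots,n\}$ and $\mathcal{X}=\{-1,1\}^n$. If $n$ is odd, a deterministic voting rule $\phi:\mathcal{X}\to\{-1,1\}$ is robust and anonymous if and only if it is a simple majority rule. If $n$ is even, no deterministic voting rule is both robust and anonymous.
   Context: A deterministic voting rule $\phi$ is anonymous if $\phi(x)=\phi((x_{\pi(i)})_{i\in N})$ for all $x$ and all permutations $\pi$ of $N$. Responsiveness: $r_i(\phi,p)=p(\{x:\phi(x)=x_i\})$ for $p\in\Delta(\mathcal{X})$ (probability distributions on $\mathcal{X}$). $\phi$ is robust if for every $p\in\Delta(\mathcal{X})$ there is some $i\in N$ with $r_i(\phi,p)>1/2$. A simple majority rule is a rule with $\phi(x)=1$ whenever $\sum_i x_i>0$ and $\phi(x)=-1$ whenever $\sum_ix_i<0$ (for odd $n$ this determines $\phi$ uniquely). *)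

(* Defs.v *)
From mathcomp Require Import all_boot all_order all_algebra all_fingroup.
From mathcomp Require Import reals.
Set Implicit Arguments. Unset Strict Implicit. Unset Printing Implicit Defensive.
Import Order.TTheory GRing.Theory Num.Theory.
Local Open Scope ring_scope.

(* Voters N = 'I_n (i.e. {0,..,n-1}, in bijection with {1,..,n}).
   A vote in {-1,1} is encoded as a bool: true = 1, false = -1. *)
Definition vote_val (b : bool) : int := if b then 1 else -1.

Definition profile (n : nat) := {ffun 'I_n -> bool}.

Definition rule (n : nat) := profile n -> bool.

Definition anonymous (n : nat) (phi : rule n) : Prop :=
  forall (x : profile n) (pi : 'S_n), phi x = phi [ffun i => x (pi i)].

Definition distribution (R : realType) (n : nat) (p : profile n -> R) : Prop :=
  (forall x, 0 <= p x) /\ \sum_(x : profile n) p x = 1.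

Definition responsiveness (R : realType) (n : nat) (phi : rule n)
  (p : profile n -> R) (i : 'I_n) : R :=
  \sum_(x : profile n | phi x == x i) p x.

Definition robust (R : realType) (n : nat) (phi : rule n) : Prop :=
  forall p : profile n -> R, distribution p ->
    exists i : 'I_n, responsiveness phi p i > 2^-1.

Definition simple_majority (n : nat) (phi : rule n) : Prop :=
  forall x : profile n,
    ((0 < \sum_(i < n) vote_val (x i))%R -> phi x = true) /\
    ((\sum_(i < n) vote_val (x i) < 0)%R -> phi x = false).

(* Main.v *)
Require Import Defs.
From mathcomp Require Import all_boot all_order all_algebra all_fingroup.
From mathcomp Require Import reals zify ring lra.
Set Implicit Arguments. Unset Strict Implicit. Unset Printing Implicit Defensive.
Import Order.TTheory GRing.Theory Num.Theory.
Local Open Scope ring_scope.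

Definition agree n (y : profile n) (b : bool) : nat := #|[pred k | y k == b]|.
Definition permp n (x : profile n) (s : 'S_n) : profile n := [ffun i => x (s i)].

Lemma agree_perm n (x : profile n) s b : agree (permp x s) b = agree x b.
Proof.
rewrite /agree -!sum1_card [RHS](reindex_inj (@perm_inj _ s)).
by apply: eq_bigl => k; rewrite !inE /permp ffunE.
Qed.

Lemma agree_tf n (x : profile n) : (agree x true + agree x false)%N = n.
Proof.
rewrite -[RHS]card_ord -(cardC [pred k | x k == true]) /agree.
congr addn; apply: eq_card => k; rewrite !inE; by case: (x k).
Qed.

Lemma sum_vote n (x : profile n) :
  \sum_(i < n) vote_val (x i) = (agree x true)%:Z - (agree x false)%:Z.
Proof.
rewrite (bigID (fun i => x i)) /=.
rewrite (eq_bigr (fun _ => 1)); last by move=> i ->.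
rewrite [X in _ + X = _](eq_bigr (fun _ => -1)); last by move=> i /negbTE ->.
rewrite !sumr_const /agree.
have -> : #|[pred i | x i]| = #|[pred k | x k == true]|.
  by apply: eq_card => k; rewrite !inE; case: (x k).
have -> : #|[pred i | ~~ x i]| = #|[pred k | x k == false]|.
  by apply: eq_card => k; rewrite !inE; case: (x k).
by rewrite mulNrn !natz.
Qed.

Lemma resp_sum (R : realType) n (phi : rule n) (p : profile n -> R) :
  \sum_i responsiveness phi p i = \sum_y p y * (agree y (phi y))%:R.
Proof.
rewrite /responsiveness.
under eq_bigr do rewrite big_mkcond.
rewrite exchange_big /=; apply: eq_bigr => y _.
rewrite -big_mkcond /= sumr_const mulr_natr /agree.
congr (_ *+ _); apply: eq_card => k; by rewrite !inE eq_sym.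
Qed.

Lemma maj_agree n (phi : rule n) (hodd : odd n) (hm : simple_majority phi)
  (x : profile n) : (n < 2 * agree x (phi x))%N.
Proof.
have htf := agree_tf x; have [h1 h2] := hm x; rewrite sum_vote in h1 h2.
case: (ltngtP (agree x false) (agree x true)) => h.
- rewrite h1; first lia. lia.
- rewrite h2; first lia. lia.
- have : odd (agree x true + agree x false) by rewrite htf.
  by rewrite h addnn odd_double.
Qed.

Lemma maj_anon n (phi : rule n) (hodd : odd n) (hm : simple_majority phi) :
  anonymous phi.
Proof.
move=> x pi; change (phi x = phi (permp x pi)).
have htf := agree_tf x; have [a1 a2] := hm x; have [b1 b2] := hm (permp x pi).
rewrite !sum_vote !agree_perm in a1 a2 b1 b2.
case: (ltngtP (agree x false) (agree x true)) => h.
- rewrite a1 ?b1 //; lia.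
- rewrite a2 ?b2 //; lia.
- have : odd (agree x true + agree x false) by rewrite htf.
  by rewrite h addnn odd_double.
Qed.

Lemma maj_robust (R : realType) n (phi : rule n) (hodd : odd n)
  (hm : simple_majority phi) : robust R phi.
Proof.
move=> p [p0 p1].
have [i hi|hno] := pickP (fun i => 2^-1 < responsiveness phi p i).
  by exists i.
exfalso.
have H1 : \sum_i responsiveness phi p i <= n%:R * 2^-1.
  have -> : n%:R * 2^-1 = \sum_(i < n) (2^-1 : R).
    by rewrite sumr_const card_ord mulr_natl.
  apply: ler_sum => i _.
  by move: (hno i) => /= /negbT; rewrite -leNgt.
have H2 : (n.+1)%:R * 2^-1 <= \sum_i responsiveness phi p i :> R.
  rewrite resp_sum.
  have -> : (n.+1)%:R * 2^-1 = \sum_y p y * ((n.+1)%:R * 2^-1) :> R.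
    by rewrite -mulr_suml p1 mul1r.
  apply: ler_sum => y _.
  apply: ler_wpM2l => //.
  have hA : (n.+1)%:R <= 2 * (agree y (phi y))%:R :> R.
    by rewrite -natrM ler_nat; apply: maj_agree.
  lra.
have e : (n.+1)%:R = n%:R + 1 :> R by rewrite mulrSr.
move: H1 H2; rewrite e; lra.
Qed.

Lemma permpM n (y : profile n) (s t : 'S_n) :
  permp (permp y s) t = permp y (t * s)%g.
Proof. by apply/ffunP => k; rewrite !ffunE permM. Qed.

Lemma permpK n (y : profile n) (i j : 'I_n) :
  permp (permp y (tperm i j)) (tperm i j) = y.
Proof. by apply/ffunP => k; rewrite !ffunE tpermK. Qed.

Lemma key (R : realType) n (phi : rule n) (x : profile n) :
  anonymous phi -> (2 * agree x (phi x) <= n)%N -> ~ robust R phi.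
Proof.
move=> han hA hrob.
pose C := [set y : profile n | [exists s : 'S_n, y == permp x s]].
have xC : x \in C.
  by rewrite inE; apply/existsP; exists 1%g; apply/eqP/ffunP => k; rewrite ffunE perm1.
set c := #|C|.
have c0 : (0 < c)%N by apply/card_gt0P; exists x.
have cR : (c%:R : R) != 0 by rewrite pnatr_eq0 -lt0n.
pose p := fun y => if y \in C then (c%:R : R)^-1 else 0.
have hdist : distribution p.
  split=> [y|]; first by rewrite /p; case: ifP => // _; rewrite invr_ge0 ler0n.
  by rewrite /p -big_mkcond /= sumr_const -/c -[(_ ^-1) *+ _]mulr_natr mulVf.
have [i hi] := hrob p hdist.
have Cphi : forall y, y \in C -> phi y = phi x /\ agree y (phi x) = agree x (phi x).
  move=> y; rewrite inE => /existsP [s /eqP ->]; split; last exact: agree_perm.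
  by symmetry; apply: han.
have Cfwd : forall y t, y \in C -> permp y t \in C.
  move=> y t; rewrite !inE => /existsP [s /eqP ->]; apply/existsP.
  by exists (t * s)%g; rewrite permpM.
have eqr : forall j, responsiveness phi p j = responsiveness phi p i.
  move=> j; rewrite /responsiveness.
  have hinj : injective (fun y => permp y (tperm i j)).
    by apply: (can_inj (g := fun y => permp y (tperm i j))) => y; apply: permpK.
  rewrite (reindex_inj hinj) /=; apply: eq_big => y.
    rewrite /permp ffunE tpermR.
    have -> : phi [ffun k => y (tperm i j k)] = phi y by symmetry; apply: han.
    done.
  move=> _; rewrite /p.
  have -> : (permp y (tperm i j) \in C) = (y \in C).
    apply/idP/idP; last exact: Cfwd.
    by move/(Cfwd _ (tperm i j)); rewrite permpK.
  done.
have tot : \sum_j responsiveness phi p j = (agree x (phi x))%:R.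
  rewrite resp_sum.
  transitivity (\sum_(y in C) ((c%:R : R)^-1 * (agree x (phi x))%:R)).
    rewrite [RHS]big_mkcond; apply: eq_bigr => y _; rewrite /p.
    by case: ifP => [/Cphi [-> ->]|_] //; rewrite mul0r.
  by rewrite sumr_const -/c -[(_ * _) *+ _]mulr_natr mulrAC mulVf ?mul1r.
rewrite (eq_bigr (fun _ => responsiveness phi p i)) ?sumr_const ?card_ord in tot;
  last by move=> j _; apply: eqr.
have hA' : 2 * (agree x (phi x))%:R <= n%:R :> R by rewrite -natrM ler_nat.
have hn : 0 < n%:R :> R by rewrite ltr0n; apply: (leq_ltn_trans _ (ltn_ord i)).
move: tot; rewrite -mulr_natr => tot.
nra.
Qed.

Theorem corollary2 (R : realType) (n : nat) :
  (odd n -> forall phi : rule n,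
      (@robust R n phi /\ anonymous phi) <-> simple_majority phi) /\
  (~~ odd n -> forall phi : rule n, ~ (@robust R n phi /\ anonymous phi)).
Proof.
split.
  move=> hodd phi; split; last first.
    by move=> hm; split; [exact: maj_robust | exact: maj_anon].
  case=> hrob han x; rewrite sum_vote; have htf := agree_tf x; split => hs.
    case E: (phi x) => //; exfalso; apply: (key (x := x) han _ hrob).
    rewrite E; lia.
  case E: (phi x) => //; exfalso; apply: (key (x := x) han _ hrob).
  rewrite E; lia.
move=> hev phi [hrob han].
pose x : profile n := [ffun i : 'I_n => (i < n./2)%N].
have hle : (n./2 <= n)%N by rewrite -{2}(odd_double_half n); lia.
have hT : agree x true = n./2.
  rewrite /agree -sum1_card.
  rewrite (eq_bigl (fun i : 'I_n => (i < n./2)%N)); last first.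
    by move=> k; rewrite !inE ffunE; case: (_ < _)%N.
  rewrite (big_ord_narrow hle).
  by rewrite sum1_card card_ord.
have htf := agree_tf x.
have hn := odd_double_half n; rewrite (negbTE hev) add0n in hn.
apply: (key (x := x) han _ hrob).
case: (phi x); lia.
Qed.
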